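(* Let $u_n=(-1)^{s_2(n)}$, where $s_2(n)$ is the sum of the binary digits of $n$. Then \[\prod_{n=0}^\infty\left(\frac{(4n+3)(2n+2)}{(4n+5)(2n+3)}\right)^{u_n}=\frac{1}{\sqrt 2}.\]
   Context: $(u_n)_{n\ge0}$ is the Thue–Morse sequence with values $\pm1$: $u_n=1$ if the binary expansion of $n$ has an even number of $1$'s and $u_n=-1$ otherwise. Infinite products are the limits of their partial products. *)

(* Defs.v *)
From Stdlib Require Import Reals ZArith Lia Lra.
From Coquelicot Require Import Coquelicot.
Open Scope R_scope.

Fixpoint bin_digit_sum_fuel (fuel n : nat) : nat :=
  match fuel with
  | O => O
  | S f => match n with
           | O => O
           | _ => (Nat.modulo n 2 + bin_digit_sum_fuel f (Nat.div n 2))%nat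
           end
  end.

Definition s2 (n : nat) : nat := bin_digit_sum_fuel n n.

Definition tm (n : nat) : Z := if Nat.even (s2 n) then 1%Z else (-1)%Z.

Definition factor (n : nat) : R :=
  powerRZ (((4 * INR n + 3) * (2 * INR n + 2)) / ((4 * INR n + 5) * (2 * INR n + 3))) (tm n).

Fixpoint partial_prod (N : nat) : R :=
  match N with
  | O => 1
  | S k => partial_prod k * factor k
  end.

(* Main.v *)
Require Import Defs.
From Stdlib Require Import Reals Lra Lia.
From Coquelicot Require Import Coquelicot.
Open Scope R_scope.

Lemma fuel_eq : forall f g n, (n <= f)%nat -> (n <= g)%nat ->
  bin_digit_sum_fuel f n = bin_digit_sum_fuel g n.
Proof.
  induction f as [|f IH]; intros g n Hf Hg.
  - assert (n = 0%nat) by lia; subst. destruct g; reflexivity.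
  - destruct g as [|g].
    + assert (n = 0%nat) by lia; subst. reflexivity.
    + destruct n as [|n]; [reflexivity|].
      cbn [bin_digit_sum_fuel].
      assert (Hd : (S n / 2 < S n)%nat) by (apply Nat.div_lt; lia).
      rewrite (IH g (S n / 2)%nat) by lia. reflexivity.
Qed.

Lemma fuel_S : forall f n, bin_digit_sum_fuel (S f) (S n) = (S n mod 2 + bin_digit_sum_fuel f (S n / 2))%nat.
Proof. reflexivity. Qed.

Lemma s2_rec : forall n, s2 n = (n mod 2 + s2 (n / 2))%nat.
Proof.
  intros [|n]; [reflexivity|].
  unfold s2.
  rewrite (fuel_eq (S n) (S (S n)) (S n)) by lia.
  rewrite fuel_S.
  assert (Hd : (S n / 2 < S n)%nat) by (apply Nat.div_lt; lia).
  rewrite (fuel_eq (S n) (S n / 2) (S n / 2)) by lia. reflexivity.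
Qed.

Lemma s2_even : forall k, s2 (2 * k) = s2 k.
Proof.
  intros k. rewrite s2_rec.
  replace ((2 * k) mod 2)%nat with 0%nat by (rewrite Nat.mul_comm, Nat.Div0.mod_mul; reflexivity).
  replace ((2 * k) / 2)%nat with k by (rewrite Nat.mul_comm, Nat.div_mul; lia).
  reflexivity.
Qed.

Lemma s2_odd : forall k, s2 (2 * k + 1) = S (s2 k).
Proof.
  intros k. rewrite s2_rec.
  replace ((2 * k + 1) mod 2)%nat with 1%nat.
  2:{ rewrite Nat.add_comm, Nat.mul_comm, Nat.Div0.mod_add; reflexivity. }
  replace ((2 * k + 1) / 2)%nat with k. reflexivity.
  rewrite Nat.add_comm, Nat.mul_comm, Nat.div_add by lia. reflexivity.
Qed.

Definition u (n : nat) : R := IZR (tm n).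

Lemma u_even : forall k, u (2 * k) = u k.
Proof. intros k; unfold u, tm; rewrite s2_even; reflexivity. Qed.

Lemma u_odd : forall k, u (2 * k + 1) = - u k.
Proof.
  intros k; unfold u, tm; rewrite s2_odd, Nat.even_succ, <- Nat.negb_even.
  destruct (Nat.even (s2 k)); simpl; lra.
Qed.

Lemma u_sq : forall n, u n = 1 \/ u n = -1.
Proof. intros n; unfold u, tm; destruct (Nat.even (s2 n)); [left|right]; reflexivity. Qed.

Lemma u_4 : forall j, u (4*j) = u j /\ u (4*j+1) = - u j /\ u (4*j+2) = - u j /\ u (4*j+3) = u j.
Proof.
  intros j.
  assert (H0 : u (4*j) = u (2*j)) by (replace (4*j)%nat with (2*(2*j))%nat by lia; apply u_even).
  assert (H1 : u (4*j+1) = - u (2*j)) by (replace (4*j+1)%nat with (2*(2*j)+1)%nat by lia; apply u_odd).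
  assert (H2 : u (4*j+2) = u (2*j+1)) by (replace (4*j+2)%nat with (2*(2*j+1))%nat by lia; apply u_even).
  assert (H3 : u (4*j+3) = - u (2*j+1)) by (replace (4*j+3)%nat with (2*(2*j+1)+1)%nat by lia; apply u_odd).
  rewrite H0, H1, H2, H3, u_even, u_odd. repeat split; lra.
Qed.

Fixpoint Ssum (N : nat) (x : R) : R :=
  match N with O => 0 | S k => Ssum k x + u k * ln (INR k + x) end.

Lemma ln_2mul : forall y, 0 < y -> ln (2 * y) = ln 2 + ln y.
Proof. intros y Hy; apply ln_mult; lra. Qed.

Lemma ln0 : ln 0 = 0.
Proof. unfold ln. case (Rlt_dec 0 0); intro h. exfalso; apply (Rlt_irrefl 0 h). reflexivity. Qed.

Lemma u0 : u 0 = 1.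
Proof. unfold u, tm. replace (s2 0) with 0%nat by reflexivity. reflexivity. Qed.
Lemma u1 : u 1 = -1.
Proof. unfold u, tm. replace (s2 1) with 1%nat by reflexivity. reflexivity. Qed.

Lemma Ssum_double : forall N x y z, 0 < x -> y = x / 2 -> z = (x + 1) / 2 ->
  Ssum (2 * N) x = Ssum N y - Ssum N z.
Proof.
  intros N x y z Hx Hy Hz; subst y z.
  induction N as [|N IH]; [simpl; lra|].
  replace (2 * S N)%nat with (S (S (2 * N))) by lia.
  cbn [Ssum]. rewrite IH.
  replace (S (2*N)) with (2*N+1)%nat by lia.
  rewrite u_even, u_odd.
  rewrite plus_INR, mult_INR. replace (INR 2) with 2 by (simpl; ring). replace (INR 1) with 1 by reflexivity.
  replace (2 * INR N + x) with (2 * (INR N + x/2)) by field.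
  replace (2 * INR N + 1 + x) with (2 * (INR N + (x+1)/2)) by field.
  assert (0 <= INR N) by apply pos_INR.
  rewrite !ln_2mul by lra. ring.
Qed.

Lemma Ssum_double0 : forall N, Ssum (2 * S N) 0 = Ssum (S N) 0 - Ssum (S N) (1/2) - ln 2.
Proof.
  induction N as [|N IH].
  - simpl. rewrite u0, u1. replace (0+0) with 0 by ring. replace (1+0) with 1 by ring.
    replace (0 + 1/2) with (/2) by field. rewrite ln0, ln_1, ln_Rinv by lra. ring.
  - replace (2 * S (S N))%nat with (S (S (2 * S N))) by lia.
    cbn [Ssum]. rewrite IH. cbn [Ssum].
    replace (S (2 * S N)) with (2 * S N + 1)%nat by lia.
    rewrite u_even, u_odd.
    rewrite plus_INR, mult_INR. replace (INR 2) with 2 by (simpl; ring). replace (INR 1) with 1 by reflexivity.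
    assert (0 < INR (S N)) by (apply lt_0_INR; lia).
    replace (2 * INR (S N) + 0) with (2 * (INR (S N) + 0)) by field.
    replace (2 * INR (S N) + 1 + 0) with (2 * (INR (S N) + 1/2)) by field.
    rewrite !ln_2mul by lra. ring.
Qed.

Lemma lnle : forall y, 0 < y -> ln y <= y - 1.
Proof.
  intros y Hy. rewrite <- (ln_exp (y - 1)). apply ln_le; [lra|].
  pose proof (exp_ineq1_le (y - 1)). lra.
Qed.

Lemma ln_succ_bounds : forall y, 0 < y -> 1/(y+1) <= ln (y+1) - ln y <= 1/y.
Proof.
  intros y Hy. split.
  - pose proof (lnle (y/(y+1)) ltac:(apply Rdiv_lt_0_compat; lra)) as H.
    rewrite ln_div in H by lra.
    replace (y/(y+1) - 1) with (- (1/(y+1))) in H by (field; lra). lra.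
  - pose proof (lnle ((y+1)/y) ltac:(apply Rdiv_lt_0_compat; lra)) as H.
    rewrite ln_div in H by lra.
    replace ((y+1)/y - 1) with (1/y) in H by (field; lra). lra.
Qed.

Definition dd (a : R) := ln a - ln (a+1) - ln (a+2) + ln (a+3).

Lemma dd_bound : forall a, 0 < a -> Rabs (dd a) <= 1/a - 1/(a+4).
Proof.
  intros a Ha. unfold dd.
  pose proof (ln_succ_bounds a Ha) as [A1 A2].
  pose proof (ln_succ_bounds (a+2) ltac:(lra)) as [B1 B2].
  replace (a+2+1) with (a+3) in B1, B2 by ring.
  assert (1/(a+2) <= 1/(a+1)).
  { unfold Rdiv; rewrite !Rmult_1_l; apply Rinv_le_contravar; lra. }
  assert (1/(a+4) <= 1/(a+3)).
  { unfold Rdiv; rewrite !Rmult_1_l; apply Rinv_le_contravar; lra. }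
  apply Rabs_le. split; lra.
Qed.

Lemma Ssum_block : forall j x, Ssum (4 * S j) x =
  Ssum (4 * j) x + u j * dd (4 * INR j + x).
Proof.
  intros j x.
  replace (4 * S j)%nat with (S (S (S (S (4 * j))))) by lia.
  cbn [Ssum].
  destruct (u_4 j) as [H0 [H1 [H2 H3]]].
  replace (S (4*j)) with (4*j+1)%nat by lia.
  replace (S (4*j+1)) with (4*j+2)%nat by lia.
  replace (S (4*j+2)) with (4*j+3)%nat by lia.
  rewrite H0, H1, H2, H3. unfold dd.
  rewrite !plus_INR, mult_INR.
  replace (INR 4) with 4 by (simpl; ring).
  replace (INR 1) with 1 by reflexivity.
  replace (INR 2) with 2 by (simpl; ring).
  replace (INR 3) with 3 by (simpl; ring).
  replace (4 * INR j + 1 + x) with (4 * INR j + x + 1) by ring.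
  replace (4 * INR j + 2 + x) with (4 * INR j + x + 2) by ring.
  replace (4 * INR j + 3 + x) with (4 * INR j + x + 3) by ring.
  ring.
Qed.

Lemma Ssum_tail : forall x n k, 0 <= x -> (1 <= n)%nat ->
  Rabs (Ssum (4 * (n + k)) x - Ssum (4 * n) x) <= 1/(4 * INR n + x) - 1/(4 * INR (n + k) + x).
Proof.
  intros x n k Hx Hn. induction k as [|k IH].
  - rewrite Nat.add_0_r. replace (Ssum (4 * n) x - Ssum (4 * n) x) with 0 by ring.
    rewrite Rabs_R0. lra.
  - replace (n + S k)%nat with (S (n + k)) by lia.
    rewrite Ssum_block.
    assert (Hp : 1 <= INR (n + k)) by (apply (le_INR 1); lia).
    pose proof (dd_bound (4 * INR (n + k) + x) ltac:(lra)) as Hd.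
    idtac.
    replace (Ssum (4 * (n + k)) x + u (n + k) * dd (4 * INR (n + k) + x) - Ssum (4 * n) x)
      with ((Ssum (4 * (n + k)) x - Ssum (4 * n) x) + u (n + k) * dd (4 * INR (n + k) + x)) by ring.
    eapply Rle_trans; [apply Rabs_triang|].
    rewrite Rabs_mult.
    assert (Rabs (u (n+k)) = 1) by (destruct (u_sq (n+k)) as [E|E]; rewrite E; [apply Rabs_R1| unfold Rabs; destruct (Rcase_abs (-1)); lra]).
    rewrite H, Rmult_1_l.
    rewrite S_INR.
    replace (4 * (INR (n + k) + 1) + x) with (4 * INR (n + k) + x + 4) by ring.
    lra.
Qed.

Lemma P_lim : forall x, 0 <= x -> exists l : R, is_lim_seq (fun M => Ssum (4 * M) x) l.
Proof.
  intros x Hx. apply ex_lim_seq_cauchy_corr.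
  intros eps. destruct (archimed_cor1 eps (cond_pos eps)) as [N [HN HN0]].
  exists N. 
  assert (key : forall n m, (N <= n)%nat -> (n <= m)%nat ->
     Rabs (Ssum (4 * m) x - Ssum (4 * n) x) < eps).
  { intros n m Hn Hm.
    replace m with (n + (m - n))%nat by lia.
    eapply Rle_lt_trans; [apply Ssum_tail; [lra|lia]|].
    assert (HN' : 0 < INR N) by (apply lt_0_INR; lia).
    assert (Hnn : INR N <= INR n) by (apply le_INR; lia).
    assert (0 < 1 / (4 * INR (n + (m - n)) + x)).
    { assert (INR N <= INR (n + (m - n))) by (apply le_INR; lia).
      apply Rdiv_lt_0_compat; lra. }
    assert (1 / (4 * INR n + x) <= / INR N).
    { unfold Rdiv; rewrite Rmult_1_l. apply Rinv_le_contravar; lra. }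
    lra. }
  intros n m Hn Hm. destruct (Nat.le_gt_cases n m) as [H|H].
  - rewrite Rabs_minus_sym. apply key; lia.
  - apply key; lia.
Qed.

Definition Sig (N : nat) : R := Ssum N (3/4) + Ssum N 1 - Ssum N (5/4) - Ssum N (3/2).

Lemma lim_unique : forall (f : nat -> R) (a b : R), is_lim_seq f a -> is_lim_seq f b -> a = b.
Proof.
  intros f a b Ha Hb. apply is_lim_seq_unique in Ha. apply is_lim_seq_unique in Hb.
  rewrite Ha in Hb. apply Rbar_finite_eq in Hb; exact Hb.
Qed.

Lemma Sig4_lim : is_lim_seq (fun M => Sig (4 * M)) (- ln 2 / 2).
Proof.
  destruct (P_lim 0 ltac:(lra)) as [l0 H0].
  destruct (P_lim (1/2) ltac:(lra)) as [lh Hh].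
  destruct (P_lim 1 ltac:(lra)) as [l1 H1].
  destruct (P_lim (3/2) ltac:(lra)) as [l32 H32].
  assert (E1 : l1 = lh - l1).
  { apply (lim_unique (fun M => Ssum (4 * (2 * M)) 1)).
    - apply (is_lim_seq_subseq (fun M => Ssum (4 * M) 1) l1 (fun M => (2 * M)%nat)); auto.
      apply eventually_subseq; intros; lia.
    - eapply is_lim_seq_ext; [|apply (is_lim_seq_minus' _ _ _ _ Hh H1)].
      intros M; cbv beta. replace (4 * (2 * M))%nat with (2 * (4 * M))%nat by lia.
      symmetry; apply Ssum_double; lra. }
  assert (E2 : l0 = l0 - lh - ln 2).
  { apply (lim_unique (fun M => Ssum (4 * (2 * S M)) 0)).
    - apply (is_lim_seq_subseq (fun M => Ssum (4 * M) 0) l0 (fun M => (2 * S M)%nat)); auto.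
      apply eventually_subseq; intros; lia.
    - apply is_lim_seq_incr_1 in H0. apply is_lim_seq_incr_1 in Hh.
      eapply is_lim_seq_ext; [|apply (is_lim_seq_minus' _ _ _ _ (is_lim_seq_minus' _ _ _ _ H0 Hh) (is_lim_seq_const (ln 2)))].
      intros M; cbv beta. replace (4 * (2 * S M))%nat with (2 * S (4 * M + 3))%nat by lia.
      rewrite Ssum_double0. replace (S (4 * M + 3)) with (4 * S M)%nat by lia. reflexivity. }
  replace (- ln 2 / 2) with (l32 + l1 - l32) by lra.
  eapply is_lim_seq_ext; [|apply (is_lim_seq_minus' _ _ _ _ (is_lim_seq_plus' _ _ _ _
     (is_lim_seq_subseq (fun M => Ssum (4 * M) (3/2)) l32 (fun M => (2 * M)%nat) ltac:(apply eventually_subseq; intros; lia) H32) H1) H32)].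
  intros M; cbv beta. unfold Sig.
  replace (4 * (2 * M))%nat with (2 * (4 * M))%nat by lia.
  rewrite (Ssum_double (4 * M) (3/2) (3/4) (5/4)) by lra. ring.
Qed.

Definition rr (n : nat) : R :=
  ((4 * INR n + 3) * (2 * INR n + 2)) / ((4 * INR n + 5) * (2 * INR n + 3)).

Lemma rr_pos : forall n, 0 < rr n.
Proof.
  intros n; unfold rr; assert (0 <= INR n) by apply pos_INR.
  apply Rdiv_lt_0_compat; apply Rmult_lt_0_compat; lra.
Qed.

Lemma Sig_S : forall N, Sig (S N) = Sig N + u N * ln (rr N).
Proof.
  intros N; unfold Sig; cbn [Ssum].
  assert (0 <= INR N) by apply pos_INR.
  replace (rr N) with (((INR N + 3/4) * (INR N + 1)) / ((INR N + 5/4) * (INR N + 3/2))).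
  2:{ unfold rr; field; lra. }
  rewrite ln_div by (apply Rmult_lt_0_compat; lra).
  rewrite !ln_mult by lra. ring.
Qed.

Lemma factor_exp : forall N, factor N = exp (u N * ln (rr N)).
Proof.
  intros N. pose proof (rr_pos N) as Hp. unfold factor, u, tm. fold (rr N).
  destruct (Nat.even (s2 N)); simpl powerRZ.
  - rewrite Rmult_1_l, exp_ln by lra. ring.
  - replace (-1 * ln (rr N)) with (- ln (rr N)) by ring.
    rewrite exp_Ropp, exp_ln by lra. f_equal; ring.
Qed.

Lemma pp_exp : forall N, partial_prod N = exp (Sig N).
Proof.
  induction N as [|N IH].
  - simpl. unfold Sig; simpl. replace (0 + 0 - 0 - 0) with 0 by ring. rewrite exp_0; reflexivity.
  - simpl. rewrite IH, factor_exp, Sig_S, exp_plus. reflexivity.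
Qed.

Lemma w_bound : forall n, Rabs (u n * ln (rr n)) <= 2 / (INR n + 1).
Proof.
  intros n. rewrite Rabs_mult.
  assert (Rabs (u n) = 1) by (destruct (u_sq n) as [E|E]; rewrite E; [apply Rabs_R1| unfold Rabs; destruct (Rcase_abs (-1)); lra]).
  rewrite H, Rmult_1_l.
  assert (Ht : 0 <= INR n) by apply pos_INR.
  pose proof (rr_pos n) as Hp.
  assert (Hle : rr n <= 1).
  { unfold rr. apply (Rmult_le_reg_r ((4 * INR n + 5) * (2 * INR n + 3))).
    apply Rmult_lt_0_compat; lra.
    unfold Rdiv. rewrite Rmult_assoc, Rinv_l, Rmult_1_r by (apply Rgt_not_eq, Rmult_lt_0_compat; lra).
    nra. }
  assert (ln (rr n) <= 0) by (rewrite <- ln_1; apply ln_le; lra).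
  pose proof (lnle (/ rr n) ltac:(apply Rinv_0_lt_compat; lra)) as H2.
  rewrite ln_Rinv in H2 by lra.
  assert (/ rr n - 1 <= 2 / (INR n + 1)).
  { unfold rr.
    assert (E : 2 / (INR n + 1) - (/ (((4 * INR n + 3) * (2 * INR n + 2)) / ((4 * INR n + 5) * (2 * INR n + 3))) - 1)
       = (8 * INR n + 3) / ((4 * INR n + 3) * (2 * INR n + 2))).
    { field; repeat split; lra. }
    assert (0 <= (8 * INR n + 3) / ((4 * INR n + 3) * (2 * INR n + 2))).
    { apply Rdiv_le_0_compat; [lra|]. apply Rmult_lt_0_compat; lra. }
    lra. }
  rewrite Rabs_left1 by lra. lra.
Qed.

Lemma w_lim : is_lim_seq (fun n => u n * ln (rr n)) 0.
Proof.
  assert (Hl : is_lim_seq (fun n => 2 / (INR n + 1)) 0).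
  { assert (H1 : is_lim_seq (fun n => INR n + 1) p_infty).
    { eapply is_lim_seq_plus; [apply is_lim_seq_INR|apply is_lim_seq_const|]. simpl. reflexivity. }
    pose proof (is_lim_seq_inv _ _ H1 ltac:(discriminate)) as H2.
    pose proof (is_lim_seq_scal_l _ 2 _ H2) as H3. simpl in H3. rewrite Rmult_0_r in H3.
    eapply is_lim_seq_ext; [|exact H3]. intros n; cbv beta. unfold Rdiv. reflexivity.
    }
  apply is_lim_seq_le_le with (u := fun n => - (2 / (INR n + 1))) (w := fun n => 2 / (INR n + 1)).
  - intros n. pose proof (w_bound n). apply Rabs_le_between in H. exact H.
  - pose proof (proj1 (is_lim_seq_opp _ _) Hl) as Ho. simpl in Ho. rewrite Ropp_0 in Ho. exact Ho.
  - exact Hl.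
Qed.

Lemma mod4 : forall (f : nat -> R) (l : R),
  (forall r, (r < 4)%nat -> is_lim_seq (fun M => f (4 * M + r)%nat) l) -> is_lim_seq f l.
Proof.
  intros f l H. apply is_lim_seq_spec. intros eps.
  assert (G : forall r, (r < 4)%nat -> exists N, forall M, (N <= M)%nat -> Rabs (f (4*M+r)%nat - l) < eps).
  { intros r Hr. specialize (H r Hr). apply is_lim_seq_spec in H. exact (H eps). }
  destruct (G 0%nat ltac:(lia)) as [N0 H0].
  destruct (G 1%nat ltac:(lia)) as [N1 H1].
  destruct (G 2%nat ltac:(lia)) as [N2 H2].
  destruct (G 3%nat ltac:(lia)) as [N3 H3].
  exists (4 * (N0 + N1 + N2 + N3))%nat. intros n Hn.
  pose proof (Nat.div_mod n 4 ltac:(lia)) as Hd.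
  pose proof (Nat.mod_upper_bound n 4 ltac:(lia)) as Hm.
  assert (Hq : (N0 + N1 + N2 + N3 <= n / 4)%nat).
  { apply Nat.div_le_lower_bound; lia. }
  rewrite Hd.
  destruct (n mod 4) as [|[|[|[|k]]]] eqn:E; try lia.
  - apply H0; lia.
  - apply H1; lia.
  - apply H2; lia.
  - apply H3; lia.
Qed.

Lemma Sig_lim : is_lim_seq Sig (- ln 2 / 2).
Proof.
  pose proof Sig4_lim as HS.
  pose proof w_lim as Hw.
  set (w := fun n => u n * ln (rr n)) in Hw.
  assert (Hwr : forall r, is_lim_seq (fun M => w (4 * M + r)%nat) 0).
  { intros r. apply (is_lim_seq_subseq w 0 (fun M => (4 * M + r)%nat)); auto.
    apply eventually_subseq; intros; lia. }
  apply mod4. intros r Hr.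
  destruct r as [|[|[|[|k]]]]; try lia.
  - eapply is_lim_seq_ext; [|exact HS]. intros M; cbv beta. rewrite Nat.add_0_r. reflexivity.
  - replace (- ln 2 / 2) with (- ln 2 / 2 + 0) by ring.
    eapply is_lim_seq_ext; [|exact (is_lim_seq_plus' _ _ _ _ HS (Hwr 0%nat))].
    intros M; cbv beta. replace (4 * M + 1)%nat with (S (4 * M)) by lia. rewrite Sig_S.
    rewrite Nat.add_0_r. reflexivity.
  - replace (- ln 2 / 2) with (- ln 2 / 2 + 0 + 0) by ring.
    eapply is_lim_seq_ext; [|exact (is_lim_seq_plus' _ _ _ _ (is_lim_seq_plus' _ _ _ _ HS (Hwr 0%nat)) (Hwr 1%nat))].
    intros M; cbv beta. replace (4 * M + 2)%nat with (S (S (4 * M))) by lia. rewrite !Sig_S.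
    rewrite Nat.add_0_r. replace (S (4 * M)) with (4 * M + 1)%nat by lia. reflexivity.
  - replace (- ln 2 / 2) with (- ln 2 / 2 + 0 + 0 + 0) by ring.
    eapply is_lim_seq_ext; [|exact (is_lim_seq_plus' _ _ _ _ (is_lim_seq_plus' _ _ _ _ (is_lim_seq_plus' _ _ _ _ HS (Hwr 0%nat)) (Hwr 1%nat)) (Hwr 2%nat))].
    intros M; cbv beta. replace (4 * M + 3)%nat with (S (S (S (4 * M)))) by lia. rewrite !Sig_S.
    rewrite Nat.add_0_r. replace (S (4 * M)) with (4 * M + 1)%nat by lia.
    replace (S (4 * M + 1)) with (4 * M + 2)%nat by lia. reflexivity.
Qed.

Theorem mainTheorem3 :
  is_lim_seq partial_prod (1 / sqrt 2).
Proof.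
  assert (E : 1 / sqrt 2 = exp (- ln 2 / 2)).
  { rewrite <- Rpower_sqrt by lra. unfold Rpower.
    replace (- ln 2 / 2) with (- (/ 2 * ln 2)) by field.
    rewrite exp_Ropp. field. apply Rgt_not_eq, exp_pos. }
  rewrite E.
  eapply is_lim_seq_ext; [intros n; symmetry; apply pp_exp|].
  apply (is_lim_seq_continuous exp Sig).
  - apply derivable_continuous_pt, derivable_pt_exp.
  - exact Sig_lim.
Qed.
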